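(* Let $C\ge 0$. If there is a $C$-competitive mixed online algorithm for an online problem $(\mathcal X,\mathcal R,d)$, then there is a $C$-competitive online algorithm for this problem in each of the three standard models of randomized online algorithms: distributions over deterministic online algorithms, behavioral online algorithms, and distributional online algorithms.
   Context: Online problem: a set $\mathcal X$ of states (configurations), a set $\mathcal R$ of requests, a start state $s^0\in\mathcal X$, a function $d:\mathcal X\times\mathcal X\to[0,\infty)$ with $d(x,x)=0$ and $d(x,z)\le d(x,y)+d(y,z)$, and a cost function $\mathrm{cost}:\mathcal X\times\mathcal R\times\mathcal X\to[0,\infty)$ satisfying $\mathrm{cost}(u,r,v)\le d(u,x)+\mathrm{cost}(x,r,y)+d(y,v)$. For a request sequence $\varrho=r^1\dots r^n$, $\mathrm{cost}_{\mathrm{opt}}(\varrho)$ is the infimum of $\sum_{t=1}^n\mathrm{cost}(x^{t-1},r^t,x^t)$ over all $x^1,\dots,x^n\in\mathcal X$ with $x^0=s^0$. A (randomized) online algorithm $\mathcal A$ is $C$-competitive if there is a constant $K$ such that $E(\mathrm{cost}_{\mathcal A}(\varrho))\le C\cdot\mathrm{cost}_{\mathrm{opt}}(\varrho)+K$ for every finite request sequence $\varrho$. $\Pi$ is the set of finitely supported probability distributions on $\mathcal X$; for $\pi,\pi'\in\Pi$, $\mathrm{cost}(\pi,r,\pi')$ is the minimum of $\sum_{x,y}\gamma(x,y)\mathrm{cost}(x,r,y)$ over probability distributions $\gamma$ on $\mathrm{supp}(\pi)\times\mathrm{supp}(\pi')$ with marginals $\pi,\pi'$. Mixed online algorithm: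 memory states $\mathcal M$, start memory $m^0$; for each full state $k=(\pi,m)\in\Pi\times\mathcal M$ and request $r$, finitely many subsequent full states $k_i=(\pi_i,m_i)$ with weights $\lambda_i>0$ summing to $1$; from $k^0=(s^0,m^0)$, on request $r^t$ it moves to $k^t=k_i$ with probability $\lambda_i$; step cost $\mathrm{cost}(\pi,r,\sum_i\lambda_i\pi_i)$, total cost the sum of step costs. Deterministic online algorithm: chooses $x^t$ as a function of $r^1,\dots,r^t$, cost $\sum_t \mathrm{cost}(x^{t-1},r^t,x^t)$; a distribution over them is a random variable with such values. Behavioral algorithm: from full state $(x^{t-1},m^{t-1})\in\mathcal X\times\mathcal M$ and $r^t$ draws $(x^t,m^t)$ from a finitely supported distribution depending only on $(x^{t-1},m^{t-1},r^t)$, cost $\sum_t\mathrm{cost}(x^{t-1},r^t,x^t)$. Distributional algorithm: deterministic map $(\pi^{t-1},m^{t-1},r^t)\mapsto(\pi^t,m^t)$ on $\Pi\times\mathcal M\times\mathcal R$, cost $\sum_t\mathrm{cost}(\pi^{t-1},r^t,\pi^t)$. *)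

(* Defs.v *)
From HB Require Import structures.
From mathcomp Require Import all_boot all_order all_algebra.
From mathcomp Require Import all_classical all_reals all_analysis.
Set Implicit Arguments.
Unset Strict Implicit.
Unset Printing Implicit Defensive.
Import Order.TTheory GRing.Theory Num.Theory.
Local Open Scope classical_set_scope.
Local Open Scope ring_scope.

Section OnlineProblem.
Variables (R : realType) (X Rq : Type).

Definition online_problem (d : X -> X -> R) (cost : X -> Rq -> X -> R) : Prop :=
  [/\ (forall x y, 0 <= d x y),
      (forall x, d x x = 0),
      (forall x y z, d x z <= d x y + d y z),
      (forall u r v, 0 <= cost u r v) &
      (forall u x r y v, cost u r v <= d u x + cost x r y + d y v)].

Definition supp (p : X -> R) : set {classic X} := [set x | p x != 0].

Definition is_dist (p : X -> R) : Prop :=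
  [/\ (forall x, 0 <= p x), finite_set (supp p) &
      \sum_(x \in supp p) p x = 1].

Record Pi := MkPi { pmf :> X -> R; pmfP : is_dist pmf }.

Definition dirac (s : X) : X -> R := fun x => if `[< x = s >] then 1 else 0.

Lemma dirac_is_dist (s : X) : is_dist (dirac s).
Proof.
have Hs : supp (dirac s) = [set s].
  rewrite /supp /dirac; apply/seteqP; split => x /=.
    by case: asboolP => // _; rewrite eqxx.
  by move->; case: asboolP => //= _; rewrite oner_neq0.
split.
- by move=> x; rewrite /dirac; case: asboolP.
- by rewrite Hs; exact: finite_set1.
- by rewrite Hs fsbig_set1 /dirac; case: asboolP.
Qed.

Definition dirac_pi (s : X) : Pi := MkPi (dirac_is_dist s).

Definition coupling (p q : X -> R) (g : X -> X -> R) : Prop :=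
  [/\ (forall x y, 0 <= g x y),
      (forall x y, g x y != 0 -> p x != 0 /\ q y != 0),
      (forall x, \sum_(y \in supp q) g x y = p x) &
      (forall y, \sum_(x \in supp p) g x y = q y)].

Variable cost : X -> Rq -> X -> R.

Definition coupling_cost (p q : X -> R) (r : Rq) (g : X -> X -> R) : R :=
  \sum_(x \in supp p) \sum_(y \in supp q) g x y * cost x r y.

(** cost(pi, r, pi') : minimum (= infimum) over couplings. *)
Definition dcost (p q : X -> R) (r : Rq) : R :=
  inf [set coupling_cost p q r g | g in [set g | coupling p q g]].

Fixpoint path_cost (x : X) (rho : seq Rq) (xs : seq X) : R :=
  match rho, xs with
  | r :: rho', y :: xs' => cost x r y + path_cost y rho' xs'
  | _, _ => 0
  end.

Definition cost_opt (s0 : X) (rho : seq Rq) : R :=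
  inf [set path_cost s0 rho xs | xs in [set xs : seq X | size xs = size rho]].

Definition competitive (s0 : X) (C : R) (E : seq Rq -> R) : Prop :=
  exists K : R, forall rho, E rho <= C * cost_opt s0 rho + K.

Definition valid_weights (T : Type) (s : seq (R * T)) : Prop :=
  all (fun p => 0 < p.1) s /\ \sum_(p <- s) p.1 = 1.

Definition mixture (M : Type) (s : seq (R * (Pi * M))) : X -> R :=
  fun x => \sum_(p <- s) p.1 * pmf p.2.1 x.

Fixpoint mixed_cost (M : Type) (step : Pi * M -> Rq -> seq (R * (Pi * M)))
    (k : Pi * M) (rho : seq Rq) : R :=
  match rho with
  | [::] => 0
  | r :: rho' =>
      dcost (pmf k.1) (mixture (step k r)) r
      + \sum_(p <- step k r) p.1 * mixed_cost step p.2 rho'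
  end.

Definition mixed_competitive (s0 : X) (C : R) : Prop :=
  exists (M : Type) (m0 : M) (step : Pi * M -> Rq -> seq (R * (Pi * M))),
    (forall k r, valid_weights (step k r)) /\
    competitive s0 C (mixed_cost step (dirac_pi s0, m0)).

Definition det_alg := seq Rq -> X.

Fixpoint det_cost_from (A : det_alg) (hist : seq Rq) (x : X) (rho : seq Rq) : R :=
  match rho with
  | [::] => 0
  | r :: rho' =>
      let h := rcons hist r in cost x r (A h) + det_cost_from A h (A h) rho'
  end.

Definition det_cost (s0 : X) (A : det_alg) (rho : seq Rq) : R :=
  det_cost_from A [::] s0 rho.

Definition randdet_competitive (s0 : X) (C : R) : Prop :=
  exists (dm : measure_display) (Om : measurableType dm)
         (P : probability Om R) (A : Om -> det_alg),
    (forall rho, measurable_fun setT (fun w => det_cost s0 (A w) rho)) /\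
    exists K : R, forall rho,
      (\int[P]_w (det_cost s0 (A w) rho)%:E <= (C * cost_opt s0 rho + K)%:E)%E.

Fixpoint beh_cost (M : Type) (step : X * M -> Rq -> seq (R * (X * M)))
    (k : X * M) (rho : seq Rq) : R :=
  match rho with
  | [::] => 0
  | r :: rho' =>
      \sum_(p <- step k r) p.1 * (cost k.1 r p.2.1 + beh_cost step p.2 rho')
  end.

Definition behavioral_competitive (s0 : X) (C : R) : Prop :=
  exists (M : Type) (m0 : M) (step : X * M -> Rq -> seq (R * (X * M))),
    (forall k r, valid_weights (step k r)) /\
    competitive s0 C (beh_cost step (s0, m0)).

Fixpoint distr_cost (M : Type) (F : Pi * M -> Rq -> Pi * M)
    (k : Pi * M) (rho : seq Rq) : R :=
  match rho with
  | [::] => 0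
  | r :: rho' => let k' := F k r in dcost (pmf k.1) (pmf k'.1) r + distr_cost F k' rho'
  end.

Definition distributional_competitive (s0 : X) (C : R) : Prop :=
  exists (M : Type) (m0 : M) (F : Pi * M -> Rq -> Pi * M),
    competitive s0 C (distr_cost F (dirac_pi s0, m0)).

End OnlineProblem.

(* Main.v *)
Require Import Defs.
From HB Require Import structures.
From mathcomp Require Import all_boot all_order all_algebra finmap.
From mathcomp Require Import all_classical all_reals all_analysis.
From mathcomp Require Import measurable_realfun ring lra.
Import Order.TTheory GRing.Theory Num.Theory.
Local Open Scope classical_set_scope.
Local Open Scope ring_scope.
Set Implicit Arguments.
Unset Strict Implicit.
Unset Printing Implicit Defensive.
Set SsrOldRewriteGoalsOrder.

Section ListLemmas.
Variables (R : realType) (T : Type).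
Implicit Types (s : seq T) (F G : T -> R).

Lemma eq_big_In s F G : (forall i, List.In i s -> F i = G i) ->
  \sum_(i <- s) F i = \sum_(i <- s) G i.
Proof.
elim: s => [|a s IH] H; first by rewrite !big_nil.
rewrite !big_cons H /=; last by left.
by rewrite IH // => i hi; apply: H; right.
Qed.

Lemma all_In (P : pred T) s i : all P s -> List.In i s -> P i.
Proof.
elim: s => [|a s IH] //= /andP[Pa Ps] [<-|hi] //; exact: IH.
Qed.

Lemma In_all (P : pred T) s : (forall i, List.In i s -> P i) -> all P s.
Proof.
elim: s => [|a s IH] //= H; apply/andP; split; first by apply: H; left.
by apply: IH => i hi; apply: H; right.
Qed.

Lemma sum_ge0_In s F : (forall i, List.In i s -> 0 <= F i) -> 0 <= \sum_(i <- s) F i.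
Proof.
elim: s => [|a s IH] H; first by rewrite big_nil.
rewrite big_cons addr_ge0 //; first by apply: H; left.
by apply: IH => i hi; apply: H; right.
Qed.

Lemma le_sum_In s F i : (forall j, List.In j s -> 0 <= F j) -> List.In i s ->
  F i <= \sum_(j <- s) F j.
Proof.
elim: s => [|a s IH] H //= [<-|hi].
  rewrite big_cons lerDl; apply: sum_ge0_In => j hj; apply: H; by right.
have Ha : 0 <= F a by apply: H; left.
have IH' := IH (fun j hj => H j (or_intror hj)) hi.
by rewrite big_cons (le_trans IH') // lerDr.
Qed.

Lemma ler_sum_In s F G : (forall i, List.In i s -> F i <= G i) ->
  \sum_(i <- s) F i <= \sum_(i <- s) G i.
Proof.
elim: s => [|a s IH] H; first by rewrite !big_nil.
rewrite !big_cons lerD //; first by apply: H; left.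
by apply: IH => i hi; apply: H; right.
Qed.

Lemma In_cat (U : Type) (s1 s2 : seq U) z :
  List.In z (s1 ++ s2) <-> List.In z s1 \/ List.In z s2.
Proof.
elim: s1 => [|a s1 IH] /=; first by split => [h|[[]|h]] //; right.
split.
  case=> [e|h]; first by left; left.
  by case/IH: h => h; [left; right|right].
case=> [[e|h]|h]; first by left.
  by right; apply/IH; left.
by right; apply/IH; right.
Qed.

Lemma In_map (U V : Type) (f : U -> V) (s : seq U) z :
  List.In z (map f s) -> exists y, List.In y s /\ z = f y.
Proof.
elim: s => [|a s IH] //= [<-|/IH [y [h1 h2]]]; first by exists a; split => //; left.
by exists y; split => //; right.
Qed.

Lemma In_map_f (U V : Type) (f : U -> V) (s : seq U) y :
  List.In y s -> List.In (f y) (map f s).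
Proof. by elim: s => [|a s IH] //= [<-|/IH]; [left|right]. Qed.

Lemma In_allpairs (U V : Type) (h : T -> V -> U)
    s (s2 : T -> seq V) z :
  List.In z [seq h q p | q <- s, p <- s2 q] ->
  exists q, exists p, [/\ List.In q s, List.In p (s2 q) & z = h q p].
Proof.
elim: s => [|a s IH] //=.
move=> /In_cat [hz|hz].
  have [p [h1 h2]] := In_map hz.
  by exists a, p; split => //; left.
have [q [p [h1 h2 h3]]] := IH hz.
by exists q, p; split => //; right.
Qed.

Lemma allpairs_In (U V : Type) (h : T -> V -> U)
    s (s2 : T -> seq V) q p :
  List.In q s -> List.In p (s2 q) -> List.In (h q p) [seq h q p | q <- s, p <- s2 q].
Proof.
elim: s => [|a s IH] //= [<-|hq] hp; apply/In_cat.
  by left; apply: In_map_f.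
by right; apply: IH.
Qed.

End ListLemmas.

Section Gen.
Variables (R : realType) (X : Type).

Lemma fsum_seq (D : set {classic X}) (s : seq {classic X}) (f : X -> R) :
  uniq s -> D `<=` [set` s] -> (forall x, x \in s -> ~ D x -> f x = 0) ->
  \sum_(x \in D) f x = \sum_(x <- s) f x.
Proof.
move=> us Ds f0; rewrite (fsbig_seq _ _ us).
apply: fsbig_widen => // x [sx nDx]; exact: f0.
Qed.

Lemma sum_pick (U : seq {classic X}) (a : X) (f : X -> R) :
  uniq U -> (a : {classic X}) \in U ->
  \sum_(x <- U) (if `[< x = a >] then f x else 0) = f a.
Proof.
elim: U => [|b U IH] //= /andP[bU uU]; rewrite in_cons big_cons.
case: (eqVneq (a : {classic X}) b) => [eab _|ab /= aU].
  rewrite -eab asboolT // big1_seq ?addr0 // => x /andP[_ xU].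
  case: asboolP => // xa.
  by move: bU; rewrite -eab -xa xU.
rewrite IH // asboolF ?add0r //.
by move=> ba; move: ab; rewrite ba eqxx.
Qed.

Lemma mem_map_In (T : Type) (l : seq T) (f : T -> {classic X}) t :
  List.In t l -> f t \in map f l.
Proof.
elim: l => [|a l IH] //= [<-|hi]; rewrite in_cons; first by rewrite eqxx.
by rewrite IH ?orbT.
Qed.

Lemma map_In (T : Type) (l : seq T) (f : T -> {classic X}) x :
  x \in map f l -> exists t, List.In t l /\ x = f t.
Proof.
elim: l => [|a l IH] //=; rewrite in_cons => /orP[/eqP ->|/IH [t [h1 h2]]].
  by exists a; split => //; left.
by exists t; split => //; right.
Qed.

Definition dm (T : Type) (l : seq T) (f : T -> X) (wt : T -> R) : X -> R :=
  fun x => \sum_(t <- l) (if `[< x = f t >] then wt t else 0).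

Lemma dm_sum (T : Type) (l : seq T) (f : T -> X) (wt : T -> R) (U : seq {classic X})
   (h : X -> R) :
  uniq U -> (forall t, List.In t l -> (f t : {classic X}) \in U) ->
  \sum_(x <- U) dm l f wt x * h x = \sum_(t <- l) wt t * h (f t).
Proof.
move=> uU cov; rewrite /dm.
under eq_bigr do rewrite big_distrl.
rewrite exchange_big /=; apply: eq_big_In => t tin.
rewrite -(sum_pick (fun x => wt t * h x) uU (cov _ tin)).
by apply: eq_bigr => x _; case: asboolP => _; rewrite ?mul0r.
Qed.

Lemma dm_supp (T : Type) (l : seq T) (f : T -> X) (wt : T -> R) x :
  dm l f wt x != 0 -> (x : {classic X}) \in map (fun t => f t : {classic X}) l.
Proof.
apply: contraNT => xl; apply/eqP; rewrite /dm.
rewrite (@eq_big_In _ _ _ _ (fun _ => 0)); first by rewrite big1.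
move=> t tin; case: asboolP => // xt.
by move: xl; rewrite xt (mem_map_In (fun t => f t : {classic X}) tin).
Qed.

Lemma fsum_dm (T : Type) (l : seq T) (f : T -> X) (wt : T -> R) (h : X -> R) :
  \sum_(x \in supp (dm l f wt)) dm l f wt x * h x = \sum_(t <- l) wt t * h (f t).
Proof.
rewrite (@fsum_seq _ (undup (map (fun t => f t : {classic X}) l))).
- apply: dm_sum; first exact: undup_uniq.
  by move=> t tin; rewrite mem_undup (mem_map_In (fun t => f t : {classic X}) tin).
- exact: undup_uniq.
- by move=> x /= /dm_supp; rewrite mem_undup.
- move=> x _ /=; rewrite /supp /= => nx.
  have -> : dm l f wt x = 0 by apply/eqP; apply/negPn/negP => /nx.
  by rewrite mul0r.
Qed.

End Gen.

Section Coup.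
Variables (R : realType) (X Rq : Type) (cost : X -> Rq -> X -> R).
Hypothesis cost_ge0 : forall u r v, 0 <= cost u r v.

Lemma cc_ge0 p q r g : coupling p q g -> 0 <= coupling_cost cost p q r g.
Proof.
move=> [g0 _ _ _]; apply: fsumr_ge0 => x _; apply: fsumr_ge0 => y _.
by rewrite mulr_ge0.
Qed.

Lemma dcost_le p q r g : coupling p q g -> dcost cost p q r <= coupling_cost cost p q r g.
Proof.
move=> cg; apply: ge_inf; last by exists g.
by exists 0 => _ [g' cg' <-]; exact: cc_ge0.
Qed.

Lemma dcost_adherent p q r (eps : R) : 0 < eps -> (exists g, coupling p q g) ->
  exists g, coupling p q g /\ coupling_cost cost p q r g <= dcost cost p q r + eps.
Proof.
move=> e0 [g cg].
have hi : has_inf [set coupling_cost cost p q r g | g in [set g | coupling p q g]].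
  split; first by exists (coupling_cost cost p q r g), g.
  by exists 0 => _ [g' cg' <-]; exact: cc_ge0.
have [_ [g' cg' <-] lt] := inf_adherent e0 hi.
by exists g'; split => //; apply: ltW.
Qed.

End Coup.

Section ListMore.
Variables (R : realType) (T : Type).

Lemma sum_neq0_In (s : seq T) (F : T -> R) : \sum_(i <- s) F i != 0 ->
  exists i, List.In i s /\ F i != 0.
Proof.
elim: s => [|a s IH]; first by rewrite big_nil eqxx.
rewrite big_cons; case: (eqVneq (F a) 0) => [->|Fa _].
  by rewrite add0r => /IH [i [h1 h2]]; exists i; split => //; right.
by exists a; split => //; left.
Qed.

Lemma psum_eq0_In (s : seq T) (F : T -> R) i : (forall j, List.In j s -> 0 <= F j) ->
  \sum_(j <- s) F j = 0 -> List.In i s -> F i = 0.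
Proof.
move=> F0 s0 hi; apply/eqP; rewrite eq_le (F0 _ hi) andbT -s0.
exact: le_sum_In.
Qed.

End ListMore.

Section Gen2.
Variables (R : realType) (X : Type).

Lemma fsum_dm2 (T : Type) (l : seq T) (f : T -> X) (wt wt' : T -> R) (h : X -> R) :
  (forall x, dm l f wt x = 0 -> dm l f wt' x = 0) ->
  \sum_(x \in supp (dm l f wt)) dm l f wt' x * h x = \sum_(t <- l) wt' t * h (f t).
Proof.
move=> H.
rewrite (@fsum_seq _ _ _ (undup (map (fun t => f t : {classic X}) l))).
- apply: dm_sum; first exact: undup_uniq.
  by move=> t tin; rewrite mem_undup (mem_map_In (fun t => f t : {classic X}) tin).
- exact: undup_uniq.
- by move=> x hx; have := dm_supp hx; rewrite /= mem_undup.
- move=> x _ /=; rewrite /supp /= => nx.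
  have -> : dm l f wt' x = 0.
    by apply: H; apply/eqP; apply/negPn/negP => /nx.
  by rewrite mul0r.
Qed.

Lemma dm0_transfer (T : Type) (l : seq T) (f : T -> X) (wt wt' : T -> R) x :
  (forall t, List.In t l -> 0 <= wt t) ->
  (forall t, List.In t l -> wt t = 0 -> wt' t = 0) ->
  dm l f wt x = 0 -> dm l f wt' x = 0.
Proof.
move=> w0 ww d0; rewrite /dm (@eq_big_In _ _ _ _ (fun _ => 0)); first by rewrite big1.
move=> t tin; case: asboolP => // xt; apply: ww => //.
have := psum_eq0_In _ d0 tin; rewrite asboolT //; apply.
by move=> j jin; case: asboolP => // _; exact: w0.
Qed.

Lemma dm_ge0 (T : Type) (l : seq T) (f : T -> X) (wt : T -> R) x :
  (forall t, List.In t l -> 0 <= wt t) -> 0 <= dm l f wt x.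
Proof.
move=> H; apply: sum_ge0_In => t tin; case: asboolP => // _; exact: H.
Qed.

End Gen2.

Section PartB.
Variables (R : realType) (X Rq : Type) (cost : X -> Rq -> X -> R).
Hypothesis cost_ge0 : forall u r v, 0 <= cost u r v.
Variables (M : Type) (step : X * M -> Rq -> seq (R * (X * M))).
Hypothesis hstep : forall k r, valid_weights (step k r).

Definition marg (nu : seq (R * (X * M))) : X -> R := dm nu (fun q => q.2.1) fst.

Lemma valid_pos (T : Type) (s : seq (R * T)) t : valid_weights s -> List.In t s -> 0 < t.1.
Proof. by move=> [hs _] ht; exact: (all_In hs ht). Qed.

Lemma marg_is_dist nu : valid_weights nu -> is_dist (marg nu).
Proof.
move=> hv; split.
- move=> x; apply: dm_ge0 => t tin; exact: ltW (valid_pos hv tin).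
- apply: (@sub_finite_set _ _ [set` map (fun q : R * (X * M) => q.2.1 : {classic X}) nu]).
    by move=> x hx; have := dm_supp hx.
  exact: finite_seq.
- rewrite (eq_fsbigr (fun x : {classic X} => marg nu x * 1)); last by move=> x _; rewrite mulr1.
  rewrite /marg fsum_dm; have [_ hs] := hv; rewrite -[RHS]hs.
  by apply: eq_bigr => q _; rewrite mulr1.
Qed.

Definition nxtB (nu : seq (R * (X * M))) (r : Rq) : seq (R * (X * M)) :=
  [seq (q.1 * p.1, p.2) | q <- nu, p <- step q.2 r].

Lemma nxtB_valid nu r : valid_weights nu -> valid_weights (nxtB nu r).
Proof.
move=> hv; split.
  apply: In_all => z hz.
  have [q [p [hq hp ->]]] := In_allpairs hz.
  by rewrite mulr_gt0 // ?(valid_pos hv hq) // (valid_pos (hstep q.2 r) hp).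
rewrite big_allpairs_dep /=; have [_ hs] := hv; rewrite -[RHS]hs.
apply: eq_bigr => q _; rewrite -big_distrr /=.
by have [_ ->] := hstep q.2 r; rewrite mulr1.
Qed.

Definition Md := {nu : seq (R * (X * M)) | valid_weights nu}.

Definition FB (k : Pi R X * Md) (r : Rq) : Pi R X * Md :=
  let nu' := exist (@valid_weights R _) (nxtB (sval k.2) r) (nxtB_valid r (svalP k.2)) in
  (MkPi (marg_is_dist (svalP nu')), nu').


Definition LB (nu : seq (R * (X * M))) (r : Rq) : seq (X * (R * (X * M))) :=
  [seq (q.2.1, (q.1 * p.1, p.2)) | q <- nu, p <- step q.2 r].

Lemma LB_pos nu r t : valid_weights nu -> List.In t (LB nu r) -> 0 < t.2.1.
Proof.
move=> hv ht; have [q [p [hq hp ->]]] := In_allpairs ht.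
by rewrite /= mulr_gt0 // ?(valid_pos hv hq) // (valid_pos (hstep q.2 r) hp).
Qed.

Lemma margL nu r x : marg nu x = dm (LB nu r) fst (fun t => t.2.1) x.
Proof.
rewrite /marg /dm /LB big_allpairs_dep /=; apply: eq_bigr => q _.
case: asboolP => _; last by rewrite big1.
by rewrite -big_distrr /=; have [_ ->] := hstep q.2 r; rewrite mulr1.
Qed.

Lemma marg'L nu r y :
  marg (nxtB nu r) y = dm (LB nu r) (fun t => t.2.2.1) (fun t => t.2.1) y.
Proof. by rewrite /marg /dm /nxtB /LB !big_allpairs_dep. Qed.

Definition gB nu r (x y : X) : R :=
  dm (LB nu r) (fun t => t.2.2.1) (fun t => if `[< x = t.1 >] then t.2.1 else 0) y.

Lemma gswap nu r x y :
  gB nu r x y = dm (LB nu r) fst (fun t => if `[< y = t.2.2.1 >] then t.2.1 else 0) x.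
Proof. by rewrite /gB /dm; apply: eq_bigr => t _; do 2 case: asboolP. Qed.


Lemma gB_coupling nu r : valid_weights nu ->
  coupling (marg nu) (marg (nxtB nu r)) (gB nu r).
Proof.
move=> hv.
have pos : forall t, List.In t (LB nu r) -> 0 < t.2.1 by move=> t; exact: LB_pos.
have hm : marg nu = dm (LB nu r) fst (fun t => t.2.1).
  by apply: funext => x; exact: margL.
have hm' : marg (nxtB nu r) = dm (LB nu r) (fun t => t.2.2.1) (fun t => t.2.1).
  by apply: funext => y; exact: marg'L.
have w0 : forall t, List.In t (LB nu r) -> 0 <= t.2.1 by move=> t tin; exact: ltW (pos t tin).
rewrite hm hm'; split.
- move=> x y; apply: dm_ge0 => t tin; case: asboolP => // _; exact: w0.
- move=> x y /sum_neq0_In [t [tin]].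
  case: ifPn => [/asboolP yt|]; last by rewrite eqxx.
  case: ifPn => [/asboolP xt _|]; last by rewrite eqxx.
  have hF1 : forall j, List.In j (LB nu r) ->
      0 <= (fun j => if `[< x = j.1 >] then j.2.1 else 0) j.
    by move=> j jin; case: asboolP => // _; exact: w0.
  have hF2 : forall j, List.In j (LB nu r) ->
      0 <= (fun j => if `[< y = j.2.2.1 >] then j.2.1 else 0) j.
    by move=> j jin; case: asboolP => // _; exact: w0.
  have l1 := le_sum_In hF1 tin; have l2 := le_sum_In hF2 tin.
  rewrite /= asboolT // in l1; rewrite /= asboolT // in l2.
  split; rewrite gt_eqF //; apply: (lt_le_trans (pos t tin)); by [].
- move=> x.
  rewrite (eq_fsbigr (fun y : {classic X} => gB nu r x y * 1)); last first.
    by move=> y _; rewrite mulr1.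
  rewrite /gB fsum_dm2.
    by rewrite /dm; apply: eq_bigr => t _; rewrite mulr1.
  move=> y; apply: dm0_transfer => // t tin ->.
  by case: asboolP.
- move=> y.
  rewrite (eq_fsbigr (fun x : {classic X} => dm (LB nu r) fst
       (fun t => if `[< y = t.2.2.1 >] then t.2.1 else 0) x * 1)); last first.
    by move=> x _; rewrite mulr1 gswap.
  rewrite fsum_dm2.
    by rewrite /dm; apply: eq_bigr => t _; rewrite mulr1.
  move=> x; apply: dm0_transfer => // t tin ->.
  by case: asboolP.
Qed.

Lemma gB_cost nu r : valid_weights nu ->
  coupling_cost cost (marg nu) (marg (nxtB nu r)) r (gB nu r) =
  \sum_(t <- LB nu r) t.2.1 * cost t.1 r t.2.2.1.
Proof.
move=> hv.
have pos : forall t, List.In t (LB nu r) -> 0 < t.2.1 by move=> t; exact: LB_pos.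
have w0 : forall t, List.In t (LB nu r) -> 0 <= t.2.1 by move=> t tin; exact: ltW (pos t tin).
have hm : marg nu = dm (LB nu r) fst (fun t => t.2.1).
  by apply: funext => x; exact: margL.
have hm' : marg (nxtB nu r) = dm (LB nu r) (fun t => t.2.2.1) (fun t => t.2.1).
  by apply: funext => y; exact: marg'L.
rewrite /coupling_cost hm hm'.
rewrite (eq_fsbigr (fun x : {classic X} =>
   dm (LB nu r) fst (fun t => t.2.1 * cost t.1 r t.2.2.1) x * 1)).
  rewrite fsum_dm2.
    by apply: eq_bigr => t _; rewrite mulr1.
  move=> x; apply: dm0_transfer => // t tin ->.
  by rewrite mul0r.
move=> x _; rewrite /gB fsum_dm2.
  rewrite mulr1 /dm; apply: eq_bigr => t _.
  by case: asboolP => [->|_]; rewrite ?mul0r.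
move=> y; apply: dm0_transfer => // t tin ->.
by case: asboolP.
Qed.

Lemma distrB_le rho : forall (pi : Pi R X) (nu : Md),
  Defs.pmf pi = marg (sval nu) ->
  distr_cost cost FB (pi, nu) rho <= \sum_(q <- sval nu) q.1 * beh_cost cost step q.2 rho.
Proof.
elim: rho => [|r rho IH] pi nu hpi.
  by rewrite /= big1 // => q _; rewrite mulr0.
rewrite /= hpi.
have IH' := IH (FB (pi, nu) r).1 (FB (pi, nu) r).2 erefl.
apply: (le_trans (lerD (dcost_le cost_ge0 r (gB_coupling r (svalP nu))) IH')).
rewrite gB_cost; last exact: (svalP nu).
rewrite /LB /nxtB !big_allpairs_dep /= -big_split /=.
rewrite le_eqVlt; apply/orP; left; apply/eqP.
apply: eq_bigr => q _; rewrite big_distrr /=.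
by rewrite -big_split /=; apply: eq_bigr => p _; rewrite mulrA mulrDr.
Qed.

End PartB.

Lemma beh_distr (R : realType) (X Rq : Type) (cost : X -> Rq -> X -> R) (s0 : X) (C : R) :
  (forall u r v, 0 <= cost u r v) ->
  behavioral_competitive cost s0 C -> distributional_competitive cost s0 C.
Proof.
move=> cost_ge0 [M [m0 [step [hstep [K HK]]]]].
have v0 : valid_weights [:: ((1 : R), (s0, m0))].
  by split; rewrite ?big_seq1 //= andbT ltr01.
exists (Md R X M), (exist _ _ v0), (FB hstep).
exists K => rho.
have hpi : Defs.pmf (dirac_pi R s0) = marg (sval (exist _ _ v0)).
  apply: funext => x; rewrite /marg /dm big_seq1 /=.
  by rewrite /Defs.dirac.
apply: (le_trans (@distrB_le R X Rq cost cost_ge0 M step hstep rho _ _ hpi)).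
by rewrite /= big_seq1 mul1r HK.
Qed.

Lemma In_mem (T : eqType) (s : seq T) y : List.In y s -> y \in s.
Proof. by elim: s => [|a s IH] //= [->|/IH]; rewrite in_cons ?eqxx // => ->; rewrite orbT. Qed.

Section PiLemmas.
Variables (R : realType) (X : Type).

Definition sq (A : set {classic X}) : seq {classic X} := fset_set A.

Lemma sq_uniq A : uniq (sq A).
Proof. exact: fset_uniq. Qed.

Lemma sq_mem (A : set {classic X}) x : finite_set A -> (x \in sq A) <-> A x.
Proof. by move=> fA; rewrite /sq in_fset_set // inE. Qed.

Lemma pi_fin (p : Pi R X) : finite_set (supp (Defs.pmf p)).
Proof. by case: p => f [? ? ?]. Qed.

Lemma pi_ge0 (p : Pi R X) x : 0 <= Defs.pmf p x.
Proof. by case: p => f [? ? ?]. Qed.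

Lemma pi_sum (p : Pi R X) : \sum_(x \in supp (Defs.pmf p)) Defs.pmf p x = 1.
Proof. by case: p => f [? ? ?]. Qed.

Lemma sumPi (p : Pi R X) (U : seq {classic X}) (h : X -> R) : uniq U ->
  (forall y, Defs.pmf p y != 0 -> (y : {classic X}) \in U) ->
  \sum_(y <- U) Defs.pmf p y * h y = \sum_(y \in supp (Defs.pmf p)) Defs.pmf p y * h y.
Proof.
move=> uU cov; apply/esym; apply: (fsum_seq uU).
  by move=> y hy; exact: (cov y hy).
move=> y _ /=; rewrite /supp /= => ny.
have -> : Defs.pmf p y = 0 by apply/eqP; apply/negPn/negP => /ny.
by rewrite mul0r.
Qed.

Lemma mix_ge0 (M : Type) (s : seq (R * (Pi R X * M))) y : valid_weights s -> 0 <= mixture s y.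
Proof.
move=> hv; apply: sum_ge0_In => p pin.
by rewrite mulr_ge0 ?pi_ge0 // ltW // (valid_pos hv pin).
Qed.

Lemma mix_pos (M : Type) (s : seq (R * (Pi R X * M))) y p : valid_weights s ->
  List.In p s -> Defs.pmf p.2.1 y != 0 -> mixture s y != 0.
Proof.
move=> hv pin py; rewrite gt_eqF //.
have h0 : 0 < p.1 * Defs.pmf p.2.1 y.
  by rewrite mulr_gt0 ?(valid_pos hv pin) // lt_neqAle eq_sym py pi_ge0.
apply: (lt_le_trans h0); rewrite /mixture.
apply: (le_sum_In (F := fun p => p.1 * Defs.pmf p.2.1 y)) => // j jin.
by rewrite mulr_ge0 ?pi_ge0 // ltW // (valid_pos hv jin).
Qed.

Fixpoint Ucov (M : Type) (s : seq (R * (Pi R X * M))) : seq {classic X} :=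
  match s with
  | [::] => [::]
  | p :: s' => sq (supp (Defs.pmf p.2.1)) ++ Ucov s'
  end.

Lemma Ucov_mem (M : Type) (s : seq (R * (Pi R X * M))) p y :
  List.In p s -> Defs.pmf p.2.1 y != 0 -> (y : {classic X}) \in Ucov s.
Proof.
elim: s => [|a s IH] //= [<-|pin] py; rewrite mem_cat.
  by rewrite (proj2 (sq_mem _ (pi_fin _))).
by rewrite IH ?orbT.
Qed.

Lemma Ucov_In (M : Type) (s : seq (R * (Pi R X * M))) y :
  (y : {classic X}) \in Ucov s -> exists p, List.In p s /\ Defs.pmf p.2.1 y != 0.
Proof.
elim: s => [|a s IH] //=; rewrite mem_cat => /orP[|/IH [p [h1 h2]]].
  by move/(sq_mem _ (pi_fin _)) => h; exists a; split => //; left.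
by exists p; split => //; right.
Qed.

Lemma mix_is_dist (M : Type) (s : seq (R * (Pi R X * M))) : valid_weights s ->
  is_dist (mixture s).
Proof.
move=> hv; set U := undup (Ucov s).
have hsub : supp (mixture s) `<=` [set` U].
  move=> y /= /sum_neq0_In [p [pin]]; rewrite mulf_eq0 negb_or => /andP[_ py].
  by rewrite mem_undup (Ucov_mem pin py).
split.
- by move=> x; exact: mix_ge0.
- exact: (sub_finite_set hsub (finite_seq _)).
rewrite (@fsum_seq _ _ _ U); first last.
- by move=> y _ /=; rewrite /supp /= => ny; apply/eqP; apply/negPn/negP => /ny.
- exact: hsub.
- exact: undup_uniq.
rewrite /mixture exchange_big /=; have [_ <-] := hv.
apply: eq_big_In => p pin; rewrite -big_distrr /= -[RHS]mulr1; congr (_ * _).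
rewrite -(pi_sum p.2.1).
rewrite (eq_fsbigr (fun y : {classic X} => Defs.pmf p.2.1 y * 1)); last by move=> y _; rewrite mulr1.
rewrite -(@sumPi p.2.1 U); first by apply: eq_bigr => y _; rewrite mulr1.
  exact: undup_uniq.
by move=> y py; rewrite mem_undup (Ucov_mem pin py).
Qed.

Lemma prod_coupling (p q : X -> R) : is_dist p -> is_dist q -> exists g, coupling p q g.
Proof.
move=> [p0 pf p1] [q0 qf q1]; exists (fun x y => p x * q y); split.
- by move=> x y; rewrite mulr_ge0.
- by move=> x y; rewrite mulf_eq0 negb_or => /andP[].
- by move=> x; rewrite -fsbig_distrr // /= q1 mulr1.
- move=> y; rewrite (eq_fsbigr (fun x : {classic X} => q y * p x)); last by move=> x _; rewrite mulrC.
  by rewrite -fsbig_distrr // /= p1 mulr1.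
Qed.

End PiLemmas.

Section PartA.
Variables (R : realType) (X Rq : Type) (cost : X -> Rq -> X -> R).
Hypothesis cost_ge0 : forall u r v, 0 <= cost u r v.
Variables (M : Type) (stepM : Pi R X * M -> Rq -> seq (R * (Pi R X * M))).
Hypothesis hstepM : forall k r, valid_weights (stepM k r).

Definition eps (t : nat) : R := (2 ^+ t.+1)^-1.
Definition Bud (t : nat) : R := (2 ^+ t)^-1.

Lemma eps_Bud t : eps t + Bud t.+1 = Bud t.
Proof.
rewrite /eps /Bud exprS.
have h2 : (2 : R) != 0 by rewrite pnatr_eq0.
have ht : (2 : R) ^+ t != 0 by rewrite expf_neq0.
by field.
Qed.

Lemma Bud_ge0 t : 0 <= Bud t.
Proof. by rewrite /Bud invr_ge0 exprn_ge0. Qed.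

Variable gc : Pi R X * M -> Rq -> nat -> X -> X -> R.
Local Notation mu k r := (mixture (stepM k r)).
Local Notation P k := (Defs.pmf k.1).
Hypothesis hgc : forall k r t, coupling (P k) (mu k r) (gc k r t) /\
  coupling_cost cost (P k) (mu k r) r (gc k r t) <= dcost cost (P k) (mu k r) r + eps t.

Definition Mb := ((Pi R X * M) * nat)%type.

Definition wA k r t (x y : X) (p : R * (Pi R X * M)) : R :=
  gc k r t x y / P k x * (p.1 * Defs.pmf p.2.1 y / mu k r y).

Definition stepB (st : X * Mb) (r : Rq) : seq (R * (X * Mb)) :=
  if P st.2.1 st.1 != 0 then
    seq.filter (fun q => 0 < q.1)
      [seq (wA st.2.1 r st.2.2 st.1 y p, (y, (p.2, st.2.2.+1)))
         | y <- sq (supp (mu st.2.1 r)), p <- stepM st.2.1 r]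
  else [:: (1, (st.1, (st.2.1, st.2.2.+1)))].

Lemma filter_sum (T : Type) (l : seq (R * T)) (F : R * T -> R) :
  (forall q, List.In q l -> 0 <= q.1) ->
  \sum_(q <- seq.filter (fun q => 0 < q.1) l) q.1 * F q = \sum_(q <- l) q.1 * F q.
Proof.
move=> l0; rewrite big_filter big_mkcond /=; apply: eq_big_In => q qin.
case: ifPn => // /negP q0; have -> : q.1 = 0.
  by apply/eqP; rewrite eq_le (l0 q qin) andbT leNgt; apply/negP.
by rewrite mul0r.
Qed.

Lemma mu_fin k r : finite_set (supp (mu k r)).
Proof. by have [] := mix_is_dist (hstepM k r). Qed.

Lemma inU k r y : (y : {classic X}) \in sq (supp (mu k r)) -> mu k r y != 0.
Proof. by move/(sq_mem _ (mu_fin k r)). Qed.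

Lemma wA_ge0 k r t x y p : P k x != 0 -> List.In p (stepM k r) -> 0 <= wA k r t x y p.
Proof.
move=> px pin; have [[g0 _ _ _] _] := hgc k r t.
rewrite /wA mulr_ge0 ?divr_ge0 ?pi_ge0 ?mulr_ge0 ?mix_ge0 //.
  exact: ltW (valid_pos (hstepM k r) pin).
exact: pi_ge0.
Qed.

Lemma sum_wA k r t x y : P k x != 0 -> mu k r y != 0 ->
  \sum_(p <- stepM k r) wA k r t x y p = gc k r t x y / P k x.
Proof.
move=> px my; rewrite /wA -big_distrr /= -[RHS]mulr1; congr (_ * _).
rewrite -big_distrl /= -/(mixture _ _) mulfV //.
Qed.

Lemma stepB_valid st r : valid_weights (stepB st r).
Proof.
rewrite /stepB; case: ifPn => px; last by split; rewrite ?big_seq1 //= andbT ltr01.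
set k := st.2.1; set t := st.2.2; set x := st.1.
split; first exact: filter_all.
rewrite (eq_bigr (fun q => q.1 * 1)); last by move=> q _; rewrite mulr1.
rewrite filter_sum; last first.
  move=> q hq; have [y [p [_ pin ->]]] := In_allpairs hq; exact: wA_ge0.
rewrite big_allpairs_dep /=.
rewrite (eq_big_seq (fun y : {classic X} => gc k r t x y / P k x)); last first.
  move=> y yU; rewrite -(sum_wA t px (inU yU)); apply: eq_bigr => p _.
  by rewrite mulr1.
rewrite -big_distrl /= -fsbig_finite; last exact: mu_fin.
have [[_ _ h _] _] := hgc k r t.
by rewrite h mulfV.
Qed.


Lemma stepB_eq x k t r : P k x != 0 ->
  stepB (x, (k, t)) r = seq.filter (fun q => 0 < q.1)
      [seq (wA k r t x y p, (y, (p.2, t.+1)))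
         | y <- sq (supp (mu k r)), p <- stepM k r].
Proof. by move=> px; rewrite /stepB /= px. Qed.

Definition V k t rho :=
  \sum_(x \in supp (P k)) P k x * beh_cost cost stepB (x, (k, t)) rho.

Lemma V_le rho : forall k t, V k t rho <= mixed_cost cost stepM k rho + Bud t.
Proof.
elim: rho => [|r rho IH] k t.
  rewrite /V /= add0r (eq_fsbigr (fun _ => 0)); last by move=> x _; rewrite mulr0.
  by rewrite fsbig1 ?Bud_ge0.
have [[g0 gsupp gm1 gm2] gcost] := hgc k r t.
set U := sq (supp (mu k r)).
set Ux := sq (supp (P k)).
have hUx : forall x, (x : {classic X}) \in Ux -> P k x != 0.
  by move=> x /(sq_mem _ (pi_fin _)).
set g := gc k r t.
set z := fun (y : X) (p : R * (Pi R X * M)) => p.1 * Defs.pmf p.2.1 y / mu k r y.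
set b := fun (y : X) (p : R * (Pi R X * M)) => beh_cost cost stepB (y, (p.2, t.+1)) rho.
have E1 : V k t (r :: rho) = \sum_(x <- Ux) \sum_(y <- U) \sum_(p <- stepM k r)
    (g x y * z y p * cost x r y + g x y * z y p * b y p).
  rewrite /V fsbig_finite; last exact: pi_fin.
  apply: eq_big_seq => x xU; have px := hUx x xU.
  have -> : beh_cost cost stepB (x, (k, t)) (r :: rho) =
     \sum_(q <- stepB (x, (k, t)) r) q.1 * (cost x r q.2.1 + beh_cost cost stepB q.2 rho) by [].
  rewrite stepB_eq // filter_sum; last first.
    move=> q hq; have [y [p [_ pin ->]]] := In_allpairs hq; exact: wA_ge0.
  rewrite big_allpairs_dep /= big_distrr /=; apply: eq_big_In => y yU.
  have my : mu k r y != 0 by apply: inU; exact: In_mem.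
  rewrite big_distrr /=; apply: eq_bigr => p _.
  rewrite /wA /z /b /g; field.
  by rewrite px my.
have hsz : forall y, List.In y U -> \sum_(p <- stepM k r) z y p = 1.
  move=> y yU; have my : mu k r y != 0 by apply: inU; exact: In_mem.
  by rewrite /z -big_distrl /= -/(mixture _ _) mulfV.
have EA : \sum_(x <- Ux) \sum_(y <- U) \sum_(p <- stepM k r) g x y * z y p * cost x r y =
    coupling_cost cost (P k) (mu k r) r g.
  rewrite /coupling_cost fsbig_finite; last exact: pi_fin.
  apply: eq_bigr => x _; rewrite fsbig_finite; last exact: mu_fin.
  apply: eq_big_In => y yU.
  by rewrite -big_distrl -big_distrr /= hsz // mulr1.
have hgy : forall y, \sum_(x <- Ux) g x y = mu k r y.
  by move=> y; rewrite -gm2 fsbig_finite //; exact: pi_fin.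
have EB : \sum_(x <- Ux) \sum_(y <- U) \sum_(p <- stepM k r) g x y * z y p * b y p =
    \sum_(p <- stepM k r) p.1 * V p.2 t.+1 rho.
  rewrite exchange_big /=.
  rewrite (eq_big_In (G := fun y => \sum_(p <- stepM k r) p.1 * (Defs.pmf p.2.1 y * b y p))); last first.
    move=> y yU; have my : mu k r y != 0 by apply: inU; exact: In_mem.
    rewrite exchange_big /=; apply: eq_bigr => p _.
    rewrite -big_distrl -big_distrl /= hgy /z; field.
    by rewrite my.
  rewrite exchange_big /=; apply: eq_big_In => p pin.
  rewrite -big_distrr /=; congr (_ * _).
  rewrite /V /b sumPi //.
    exact: sq_uniq.
  move=> y py; apply/(sq_mem _ (mu_fin k r)); exact: (mix_pos (hstepM k r) pin py).
rewrite E1 (eq_bigr (fun x => \sum_(y <- U) \sum_(p <- stepM k r) g x y * z y p * cost x r y +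
   \sum_(y <- U) \sum_(p <- stepM k r) g x y * z y p * b y p)); last first.
  by move=> x _; rewrite -big_split /=; apply: eq_bigr => y _; rewrite -big_split.
rewrite big_split /= EA EB /=.
rewrite -(eps_Bud t) addrA.
have hS : \sum_(p <- stepM k r) p.1 * V p.2 t.+1 rho <=
    \sum_(p <- stepM k r) p.1 * mixed_cost cost stepM p.2 rho + Bud t.+1.
  have [hs0 hs1] := hstepM k r.
  rewrite -[X in _ + X]mul1r -hs1 big_distrl -big_split /=.
  apply: ler_sum_In => p pin; rewrite -mulrDr.
  by rewrite ler_wpM2l ?IH // ltW // (valid_pos (hstepM k r) pin).
move: gcost hS; rewrite -/g => h1 h2; lra.
Qed.

End PartA.

Lemma supp_dirac (R : realType) (X : Type) (s : X) :
  supp (Defs.pmf (dirac_pi R s)) = [set (s : {classic X})].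
Proof.
rewrite /supp /= /Defs.dirac; apply/seteqP; split => x /=.
  by case: asboolP => // _; rewrite eqxx.
by move->; case: asboolP => //= _; rewrite oner_neq0.
Qed.

Lemma mixed_beh (R : realType) (X Rq : Type) (cost : X -> Rq -> X -> R) (s0 : X) (C : R) :
  (forall u r v, 0 <= cost u r v) ->
  mixed_competitive cost s0 C -> behavioral_competitive cost s0 C.
Proof.
move=> cost_ge0 [M [m0 [stepM [hstepM [K HK]]]]].
have hg : forall k r t, exists g,
    coupling (Defs.pmf k.1) (mixture (stepM k r)) g /\
    coupling_cost cost (Defs.pmf k.1) (mixture (stepM k r)) r g <=
    dcost cost (Defs.pmf k.1) (mixture (stepM k r)) r + eps R t.
  move=> k r t; apply: dcost_adherent => //.
    by rewrite /eps invr_gt0 exprn_gt0.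
  apply: prod_coupling; last exact: mix_is_dist.
  by case: k.1 => f hf.
pose gc := fun k r t => proj1_sig (cid (hg k r t)).
have hgc : forall k r t, coupling (Defs.pmf k.1) (mixture (stepM k r)) (gc k r t) /\
    coupling_cost cost (Defs.pmf k.1) (mixture (stepM k r)) r (gc k r t) <=
    dcost cost (Defs.pmf k.1) (mixture (stepM k r)) r + eps R t.
  by move=> k r t; exact: (proj2_sig (cid (hg k r t))).
exists (Mb R X M), ((dirac_pi R s0, m0), 0%N), (stepB stepM gc).
split; first exact: stepB_valid.
exists (K + 1) => rho.
have := V_le hstepM hgc rho (dirac_pi R s0, m0) 0.
rewrite /V supp_dirac fsbig_set1 /= /Defs.dirac asboolT // mul1r /Bud expr0 invr1.
move=> h; apply: (le_trans h); rewrite addrA lerD2r; exact: HK.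
Qed.

Section PartC.
Variables (R : realType) (X Rq : Type) (cost : X -> Rq -> X -> R).
Hypothesis cost_ge0 : forall u r v, 0 <= cost u r v.
Variables (M : Type) (step : X * M -> Rq -> seq (R * (X * M))).
Hypothesis hstep : forall k r, valid_weights (step k r).

Local Notation st_t := ((X * M) * (R * R))%type.

Fixpoint chooseC (k : X * M) (a w : R) (s : seq (R * (X * M))) (u : R) : st_t :=
  match s with
  | [::] => (k, (a, w))
  | p :: s' => if u < a + w * p.1 then (p.2, (a, w * p.1))
               else chooseC k (a + w * p.1) w s' u
  end.

Definition nxt (st : st_t) (r : Rq) (u : R) : st_t :=
  chooseC st.1 st.2.1 st.2.2 (step st.1 r) u.

Fixpoint Gc (st : st_t) (rho : seq Rq) (u : R) : R :=
  match rho with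
  | [::] => 0
  | r :: rho' => let st' := nxt st r u in cost st.1.1 r st'.1.1 + Gc st' rho' u
  end.

Lemma Gc_ge0 rho st u : 0 <= Gc st rho u.
Proof.
elim: rho st => [|r rho IH] st /=; first by [].
by rewrite addr_ge0.
Qed.

Definition Hc (k : X * M) (r : Rq) (rho : seq Rq) (w : R) s a u : R :=
  let st' := chooseC k a w s u in cost k.1 r st'.1.1 + Gc st' rho u.

Lemma Gc_cons k a w r rho u :
  Gc (k, (a, w)) (r :: rho) u = Hc k r rho w (step k r) a u.
Proof. by []. Qed.

Lemma Hc_cons k r rho w p s a u :
  Hc k r rho w (p :: s) a u =
  if u < a + w * p.1 then cost k.1 r p.2.1 + Gc (p.2, (a, w * p.1)) rho u
  else Hc k r rho w s (a + w * p.1) u.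
Proof. by rewrite /Hc /=; case: ifP. Qed.

Lemma measurable_Hc_gen k r rho w :
  (forall st, measurable_fun [set: R] (Gc st rho)) ->
  forall s a, measurable_fun [set: R] (Hc k r rho w s a).
Proof.
move=> IH; elim=> [|p s IHs] a.
  rewrite /Hc /=.
  apply: measurable_realfun.measurable_funD; first exact: measurable_cst.
  exact: IH.
have -> : Hc k r rho w (p :: s) a =
   (fun u => if u < a + w * p.1 then cost k.1 r p.2.1 + Gc (p.2, (a, w * p.1)) rho u
             else Hc k r rho w s (a + w * p.1) u).
  by apply: funext => u; rewrite Hc_cons.
apply: measurable_fun_if => //.
- apply: measurable_realfun.measurable_fun_ltr => //; exact: measurable_cst.
- apply: (measurable_funS measurableT (@subsetT _ _)).
  by apply: measurable_realfun.measurable_funD => //; exact: IH.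
- exact: (measurable_funS measurableT (@subsetT _ _) (IHs _)).
Qed.

Lemma measurable_Gc rho : forall st,
  measurable_fun [set: R] (Gc st rho).
Proof.
elim: rho => [|r rho IH] st.
  exact: measurable_cst.
case: st => k [a w].
have -> : Gc (k, (a, w)) (r :: rho) = Hc k r rho w (step k r) a.
  by apply: funext => u.
exact: measurable_Hc_gen.
Qed.

Local Notation mu := (@lebesgue_measure R).

Lemma int_cst_co (a b c : R) : a <= b ->
  (\int[mu]_(x in `[a, b[) c%:E = (c * (b - a))%:E)%E.
Proof.
move=> ab; rewrite integral_cst //= lebesgue_measure_itv /= lte_fin.
case: ifPn => [_|]; first by rewrite -EFinB -EFinM.
rewrite -leNgt => ba; have -> : b = a by apply/eqP; rewrite eq_le ab ba.
by rewrite subrr mulr0 mule0.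
Qed.

Lemma itv_co_split (a b c : R) : a <= b -> b <= c ->
  `[a, c[%classic = `[a, b[%classic `|` `[b, c[%classic :> set R.
Proof.
move=> ab bc; rewrite !set_itvE; apply/seteqP; split => x /=.
  move=> /andP[ax xc]; case: (ltP x b) => xb; first by left; apply/andP.
  by right; apply/andP.
case=> /andP[h1 h2]; apply/andP; split => //.
  exact: (lt_le_trans h2 bc).
exact: (le_trans ab h1).
Qed.

Lemma itv_co_disj (a b c : R) : [disjoint `[a, b[%classic & `[b, c[%classic :> set R].
Proof.
rewrite /disj_set; apply/eqP; rewrite !set_itvE; apply/seteqP; split => x //=.
move=> [/andP[_ xb] /andP[bx _]].
by move: (lt_le_trans xb bx); rewrite ltxx.
Qed.

Lemma mGc st rho (D : set R) : measurable_fun D (EFin \o Gc st rho).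
Proof.
apply: (measurable_funS measurableT (@subsetT _ _)).
by apply/measurable_realfun.measurable_EFinP; exact: measurable_Gc.
Qed.

Lemma measurable_Hc k r rho w s a : measurable_fun [set: R] (Hc k r rho w s a).
Proof. by apply: measurable_Hc_gen => st; exact: measurable_Gc. Qed.

Lemma int_Hc k r rho w : 0 <= w ->
  (forall k' a' w', 0 <= w' ->
    (\int[mu]_(u in `[a', (a' + w')%R[) (Gc (k', (a', w')) rho u)%:E =
     (w' * beh_cost cost step k' rho)%:E)%E) ->
  forall s a, all (fun p => 0 < p.1) s ->
  (\int[mu]_(u in `[a, (a + w * \sum_(p <- s) p.1)%R[) (Hc k r rho w s a u)%:E =
   (w * \sum_(p <- s) p.1 * (cost k.1 r p.2.1 + beh_cost cost step p.2 rho))%:E)%E.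
Proof.
move=> w0 IH; elim=> [|p s IHs] a /= hs.
  by rewrite !big_nil mulr0 addr0 set_itvco0 integral_set0.
move: hs => /andP[p0 hs].
have wp0 : 0 <= w * p.1 by rewrite mulr_ge0 // ltW.
have wS0 : 0 <= w * \sum_(q <- s) q.1.
  rewrite mulr_ge0 //; elim: s hs {IHs} => [|q s IHq] /=; first by rewrite big_nil.
  by move=> /andP[q0 hq]; rewrite big_cons addr_ge0 ?(IHq hq) // ltW.
rewrite big_cons mulrDr addrA.
rewrite (@itv_co_split _ (a + w * p.1)); first last.
- by rewrite lerDl.
- by rewrite lerDl.
rewrite ge0_integral_setU //; first last.
- exact: itv_co_disj.
- by move=> x _; rewrite lee_fin /Hc addr_ge0 // Gc_ge0.
- apply/measurable_EFinP.
  apply: (measurable_funS measurableT (@subsetT _ _)).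
  exact: measurable_Hc.
under eq_integral => u hu.
  move: hu; rewrite inE /= in_itv /= => /andP[_ ua].
  rewrite Hc_cons ua EFinD.
  over.
rewrite ge0_integralD //; try (by move=> ? _; rewrite lee_fin ?Gc_ge0); try exact: mGc.
rewrite int_cst_co; last by rewrite lerDl.
rewrite IH //.
under [X in (_ + X)%E]eq_integral => u hu.
  move: hu; rewrite inE /= in_itv /= => /andP[au _].
  rewrite Hc_cons ltNge au /=.
  over.
rewrite IHs //.
rewrite big_cons -!EFinD; congr EFin.
ring.
Qed.

Lemma int_Gc rho : forall k a w, 0 <= w ->
  (\int[mu]_(u in `[a, (a + w)%R[) (Gc (k, (a, w)) rho u)%:E =
   (w * beh_cost cost step k rho)%:E)%E.
Proof.
elim: rho => [|r rho IH] k a w w0.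
  by rewrite /= mulr0 integral0.
have [hs0 hs1] := hstep k r.
have -> : a + w = a + w * \sum_(p <- step k r) p.1 by rewrite hs1 mulr1.
under eq_integral => u _ do rewrite Gc_cons.
by rewrite int_Hc.
Qed.


Variables (s0 : X) (m0 : M).

Definition stateC (u : R) (h : seq Rq) : st_t :=
  foldl (fun st r => nxt st r u) ((s0, m0), (0, 1)) h.

Definition algC (u : R) : det_alg X Rq := fun h => (stateC u h).1.1.

Lemma det_cost_fromC u rho : forall h,
  det_cost_from cost (algC u) h (algC u h) rho = Gc (stateC u h) rho u.
Proof.
elim: rho => [|r rho IH] h //=.
by rewrite IH /algC /stateC foldl_rcons.
Qed.

Lemma det_costC u rho : det_cost cost s0 (algC u) rho = Gc ((s0, m0), (0, 1)) rho u.
Proof. by rewrite /det_cost -(det_cost_fromC u rho [::]). Qed.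

End PartC.

Lemma beh_randdet (R : realType) (X Rq : Type) (cost : X -> Rq -> X -> R) (s0 : X) (C : R) :
  (forall u r v, 0 <= cost u r v) ->
  behavioral_competitive cost s0 C -> randdet_competitive cost s0 C.
Proof.
move=> cost_ge0 [M [m0 [step [hstep [K HK]]]]].
exists _, _, (uniform_prob (@ltr01 R)), (fun u => algC step s0 m0 u).
split.
  move=> rho.
  have -> : (fun w => det_cost cost s0 (algC step s0 m0 w) rho) =
            Gc cost step ((s0, m0), (0, 1)) rho.
    by apply: funext => u; rewrite det_costC.
  exact: measurable_Gc.
exists K => rho.
under eq_integral do rewrite det_costC.
rewrite integral_uniform //; first last.
- by move=> x; rewrite lee_fin Gc_ge0.
- apply/measurable_EFinP; exact: measurable_Gc.
rewrite subr0 invr1 mul1e -integral_itv_bndo_bndc; last first.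
  apply/measurable_EFinP; apply: (measurable_funS measurableT (@subsetT _ _)).
  exact: measurable_Gc.
have := @int_Gc R X Rq cost cost_ge0 M step hstep rho (s0, m0) 0 1 ler01.
rewrite add0r => ->.
by rewrite lee_fin mul1r HK.
Qed.
Unset Implicit Arguments.

Theorem mainTheorem3 (R : realType) (X Rq : Type) (s0 : X)
    (d : X -> X -> R) (cost : X -> Rq -> X -> R) (C : R) :
  online_problem d cost -> 0 <= C ->
  mixed_competitive cost s0 C ->
  [/\ randdet_competitive cost s0 C,
      behavioral_competitive cost s0 C &
      distributional_competitive cost s0 C].
Proof.
move=> [_ _ _ cost_ge0 _] C0 hm.
have hb := mixed_beh cost_ge0 hm.
split; [exact: beh_randdet | exact: hb | exact: beh_distr].
Qed.
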